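(* Let $F$ satisfy the standing assumption, let $A\colon X\rightrightarrows X^*$ be monotone, let $T_A=(A+F)^{-1}F$ be its $F$-resolvent, and let $T_{A^{-1}}=(A^{-1}+F^{-1})^{-1}F^{-1}$ be the $F^{-1}$-resolvent of $A^{-1}$. Then $\operatorname{dom}T_{A^{-1}}=F(\operatorname{ran}(A^{-1}+F^{-1}))$, and for every $x^*\in\operatorname{dom}T_{A^{-1}}$ and $y^*\in X^*$, $$y^*=T_{A^{-1}}x^*\iff y^*=F\Big(F^{-1}x^*-T_A\big(F^{-1}\big(y^*+F(F^{-1}x^*-F^{-1}y^* )\big)\big)\Big).$$
   Context: $X$ is a real reflexive Banach space with dual $X^*$ and pairing $\langle\cdot,\cdot\rangle$. Standing assumption: $F\colon X\to X^*$ is single-valued with full domain, maximal monotone, strictly monotone ($\langle x-y,Fx-Fy\rangle>0$ for $x\ne y$), 3*-monotone (for every $(x,x^* )\in X\times X^*$, $\sup_{y\in X}\langle x-y,Fy-x^*\rangle<+\infty$), and surjective (hence bijective, so $F^{-1}\colon X^*\to X$ is single-valued). Inverses of set-valued operators are graph inverses; $T_A$ and $T_{A^{-1}}$ are at most single-valued. *)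

(* Defs.v *)
From Stdlib Require Import Reals Lra.
Open Scope R_scope.
Set Implicit Arguments.

Record NormedSpace := {
  carrier :> Type;
  vzero : carrier;
  vadd : carrier -> carrier -> carrier;
  vopp : carrier -> carrier;
  vscal : R -> carrier -> carrier;
  norm : carrier -> R;
  vaddA : forall x y z, vadd x (vadd y z) = vadd (vadd x y) z;
  vaddC : forall x y, vadd x y = vadd y x;
  vadd0 : forall x, vadd x vzero = x;
  vaddN : forall x, vadd x (vopp x) = vzero;
  vscalA : forall a b x, vscal a (vscal b x) = vscal (a * b) x;
  vscal1 : forall x, vscal 1 x = x;
  vscalDv : forall a x y, vscal a (vadd x y) = vadd (vscal a x) (vscal a y);
  vscalDs : forall a b x, vscal (a + b) x = vadd (vscal a x) (vscal b x);
  norm_ge0 : forall x, 0 <= norm x;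
  norm_eq0 : forall x, norm x = 0 -> x = vzero;
  normZ : forall a x, norm (vscal a x) = Rabs a * norm x;
  normD : forall x y, norm (vadd x y) <= norm x + norm y
}.

Arguments vzero {n}.
Arguments vadd {n} _ _.
Arguments vopp {n} _.
Arguments vscal {n} _ _.
Arguments norm {n} _.
Definition vsub {X : NormedSpace} (x y : X) : X := vadd x (vopp y).

Definition complete (X : NormedSpace) : Prop :=
  forall u : nat -> X,
    (forall eps, 0 < eps -> exists N, forall m n, (N <= m)%nat -> (N <= n)%nat ->
        norm (vsub (u m) (u n)) < eps) ->
    exists l : X, forall eps, 0 < eps -> exists N, forall n, (N <= n)%nat ->
        norm (vsub (u n) l) < eps.

Record dual (X : NormedSpace) := {
  dfun :> X -> R;
  dadditive : forall x y, dfun (vadd x y) = dfun x + dfun y;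
  dhomog : forall a x, dfun (vscal a x) = a * dfun x;
  dbounded : exists C, forall x, Rabs (dfun x) <= C * norm x
}.

Definition pairing {X : NormedSpace} (x : X) (f : dual X) : R := f x.

Section DualOps.
Variable X : NormedSpace.

Definition dadd (f g : dual X) : dual X.
Proof.
  refine {| dfun := fun x => f x + g x |}.
  - intros x y; rewrite (dadditive f), (dadditive g); ring.
  - intros a x; rewrite (dhomog f), (dhomog g); ring.
  - destruct (dbounded f) as [C1 H1]; destruct (dbounded g) as [C2 H2].
    exists (C1 + C2); intro x.
    eapply Rle_trans; [apply Rabs_triang|].
    specialize (H1 x); specialize (H2 x); nra.
Defined.

Definition dscal (a : R) (f : dual X) : dual X.
Proof.
  refine {| dfun := fun x => a * f x |}.
  - intros x y; rewrite (dadditive f); ring.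
  - intros b x; rewrite (dhomog f); ring.
  - destruct (dbounded f) as [C H].
    exists (Rabs a * C); intro x.
    rewrite Rabs_mult. specialize (H x).
    assert (0 <= Rabs a) by apply Rabs_pos. nra.
Defined.

Definition dopp (f : dual X) : dual X := dscal (-1) f.
Definition dsub (f g : dual X) : dual X := dadd f (dopp g).
End DualOps.

(** Continuity of
    phi on X^* is written out: |phi f| <= C * M whenever M >= 0 bounds f,
    i.e. |phi f| <= C * ||f||_* . *)
Definition reflexive (X : NormedSpace) : Prop :=
  forall phi : dual X -> R,
    (forall f g, phi (dadd f g) = phi f + phi g) ->
    (forall a f, phi (dscal a f) = a * phi f) ->
    (exists C, forall (f : dual X) M, 0 <= M ->
        (forall x, Rabs (f x) <= M * norm x) -> Rabs (phi f) <= C * M) ->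
    exists x : X, forall f : dual X, phi f = f x.

Definition setop (U V : Type) := U -> V -> Prop.

Definition fgraph (U V : Type) (f : U -> V) : setop U V := fun u v => v = f u.
Definition op_inv (U V : Type) (A : setop U V) : setop V U := fun v u => A u v.
Definition op_add (U V : Type) (addV : V -> V -> V) (A B : setop U V) : setop U V :=
  fun u v => exists a b, A u a /\ B u b /\ v = addV a b.
Definition op_comp (U V W : Type) (A : setop V W) (B : setop U V) : setop U W :=
  fun u w => exists v, B u v /\ A v w.
Definition dom (U V : Type) (A : setop U V) : U -> Prop := fun u => exists v, A u v.
Definition ran (U V : Type) (A : setop U V) : V -> Prop := fun v => exists u, A u v.
Definition image (U V : Type) (f : U -> V) (S : U -> Prop) : V -> Prop :=
  fun v => exists u, S u /\ v = f u.

Definition monotone (X : NormedSpace) (A : setop X (dual X)) : Prop :=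
  forall x y xs ys, A x xs -> A y ys -> 0 <= pairing (vsub x y) (dsub xs ys).

Definition maximal_monotone (X : NormedSpace) (A : setop X (dual X)) : Prop :=
  monotone A /\
  forall x xs, (forall y ys, A y ys -> 0 <= pairing (vsub x y) (dsub xs ys)) -> A x xs.

Definition strictly_monotone (X : NormedSpace) (F : X -> dual X) : Prop :=
  forall x y, x <> y -> 0 < pairing (vsub x y) (dsub (F x) (F y)).

Definition three_star_monotone (X : NormedSpace) (F : X -> dual X) : Prop :=
  forall (x : X) (xs : dual X), exists M, forall y : X,
    pairing (vsub x y) (dsub (F y) xs) <= M.

Definition resolvent (X : NormedSpace) (F : X -> dual X) (A : setop X (dual X))
  : setop X X :=
  op_comp (op_inv (op_add (@dadd X) A (fgraph F))) (fgraph F).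

(** F^{-1}-resolvent of A^{-1} : X^* => X  :  (A^{-1} + F^{-1})^{-1} F^{-1},
    where G = F^{-1} *)
Definition inv_resolvent (X : NormedSpace) (G : dual X -> X) (A : setop X (dual X))
  : setop (dual X) (dual X) :=
  op_comp (op_inv (op_add (@vadd X) (op_inv A) (fgraph G))) (fgraph G).

(* Main.v *)
Require Import Defs.
From Stdlib Require Import Reals Lra FunctionalExtensionality ProofIrrelevance.
Open Scope R_scope.

Lemma dual_ext (X : NormedSpace) (f g : dual X) : (forall x, f x = g x) -> f = g.
Proof.
  destruct f as [f fa fh fb], g as [g ga gh gb]; simpl; intro H.
  assert (f = g) by (apply functional_extensionality; exact H). subst g.
  f_equal; apply proof_irrelevance.
Qed.

Lemma sub_of_add (X : NormedSpace) (a b c : X) : vadd a b = c -> a = vsub c b.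
Proof.
  intro H; unfold vsub; rewrite <- H, <- vaddA, vaddN, vadd0; reflexivity.
Qed.

Lemma add_of_sub (X : NormedSpace) (a b c : X) : a = vsub c b -> vadd a b = c.
Proof.
  intro H; subst a; unfold vsub; rewrite <- vaddA, (vaddC _ (vopp b)), vaddN, vadd0; reflexivity.
Qed.

Theorem theorem7p1
  (X : NormedSpace) (HXc : complete X) (HXr : reflexive X)
  (F : X -> dual X)
  (HFmax : maximal_monotone (fgraph F))
  (HFstr : strictly_monotone F)
  (HF3 : three_star_monotone F)
  (HFsurj : forall xs : dual X, exists x : X, F x = xs)
  (G : dual X -> X)
  (HGr : forall xs : dual X, F (G xs) = xs)
  (HGl : forall x : X, G (F x) = x)
  (A : setop X (dual X)) (HA : monotone A) :
  (forall xs : dual X,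
      dom (inv_resolvent G A) xs <->
      image F (ran (op_add (@vadd X) (op_inv A) (fgraph G))) xs)
  /\
  (forall xs : dual X, dom (inv_resolvent G A) xs ->
   forall ys : dual X,
     inv_resolvent G A xs ys <->
     exists w : X,
       resolvent F A (G (dadd ys (F (vsub (G xs) (G ys))))) w /\
       ys = F (vsub (G xs) w)).
Proof.
  split.
  - intro xs; split.
    + intros [ys [v [Hv [a [b [Ha [Hb Hvab]]]]]]].
      unfold fgraph in Hv; subst v.
      exists (G xs); split; [|now rewrite HGr].
      exists ys; exists a, b; auto.
    + intros [u [[ys [a [b [Ha [Hb Hu]]]]] Hxs]].
      exists ys; exists (G xs); split; [reflexivity|].
      exists a, b; repeat split; auto. rewrite Hxs, HGl; exact Hu.
  - intros xs _ ys; split.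
    + intros [v [Hv [a [b [Ha [Hb Hvab]]]]]].
      unfold fgraph in Hv, Hb; subst v b.
      assert (Ea : a = vsub (G xs) (G ys)) by (apply sub_of_add; auto).
      subst a.
      exists (vsub (G xs) (G ys)); split.
      * exists (F (G (dadd ys (F (vsub (G xs) (G ys)))))); split; [reflexivity|].
        exists ys, (F (vsub (G xs) (G ys))); repeat split; auto.
      * assert (E : G ys = vsub (G xs) (vsub (G xs) (G ys))).
        { apply sub_of_add. rewrite vaddC. apply add_of_sub. reflexivity. }
        rewrite <- E, HGr; reflexivity.
    + intros [w [[v [Hv [a [b [Ha [Hb Hvab]]]]]] Hys]].
      unfold fgraph in Hv, Hb; subst v b.
      rewrite HGr in Hvab.
      assert (Hw : w = vsub (G xs) (G ys)).
      { apply sub_of_add. rewrite vaddC. apply add_of_sub.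
        rewrite Hys, HGl; reflexivity. }
      assert (Eay : a = ys).
      { apply dual_ext; intro x.
        assert (H := f_equal (fun f : dual X => f x) Hvab); simpl in H.
        rewrite <- Hw in H. lra. }
      subst a w.
      exists (G xs); split; [reflexivity|].
      exists (vsub (G xs) (G ys)), (G ys); repeat split; auto.
      symmetry; apply add_of_sub; reflexivity.
Qed.
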